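(* Let $\Gamma$ be a metric graph as described in the context, let $A\subset\Gamma$ be a closed set and let $f\colon A\to\mathbb{R}$ be bounded. Let $u^*_f$ be the convex envelope of $f$. Then $u^*_f$ is bounded on $\Gamma$ if and only if $A$ contains every terminal node of $\Gamma$. In this case, \[ \inf_A f\le u^*_f(x)\le \sup_A f\qquad\text{for all } x\in\Gamma. \]
   Context: $\Gamma$ is a metric graph: a finite, connected, simple graph with vertex set $\mathrm{V}$ and edge set $\mathrm{E}$ (each vertex has degree between $1$ and some finite bound), each edge $\mathrm{e}$ being identified with an interval $[0,\ell_{\mathrm{e}}]$ of positive length, endpoints identified with the two vertices of $\mathrm{e}$. $\Gamma$ is regarded as a connected compact metric space with the path distance $d(x,y)$ (length of a shortest path in $\Gamma$ from $x$ to $y$); it is assumed that for $x,y$ on the same edge, $d(x,y)=|x-y|$. For $x,y\in\Gamma$, $[x,y]$ denotes the minimal path between $x$ and $y$. The degree of a vertex is the number of edges incident to it; a vertex of degree $1$ is called terminal (exterior). A function $u\colon\Gamma\to\mathbb{R}$ is convex if for all $x,y\in\Gamma$ and all $z\in[x,y]$, $u(z)\le \frac{d(y,z)}{d(x,y)}u(x)+\frac{d(x,z)}{d(x,y)}u(y)$. The convex envelope of $f\colon A\to\mathbb{R}$ is $u^*_f(x)=\sup\{u(x): u\colon\Gamma\to\mathbb{R}\text{ convex},\ u\le f \text{ on } A\}$. *)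

(* Defs.v *)
From HB Require Import structures.
From mathcomp Require Import all_boot all_order all_algebra.
From mathcomp Require Import all_classical all_reals.
From mathcomp Require Import ereal.
Set Implicit Arguments. Unset Strict Implicit. Unset Printing Implicit Defensive.
Import Order.TTheory GRing.Theory Num.Theory.
Local Open Scope classical_set_scope.
Local Open Scope ring_scope.

(* A metric graph: finite simple connected graph on a finite vertex type,
   every vertex of degree >= 1 (finiteness gives the degree bound),
   with positive edge lengths. *)
Record mgraph (R : realType) := MGraph {
  mV : finType;
  madj : rel mV;
  mlen : mV -> mV -> R;
  madj_sym : symmetric madj;
  madj_irr : irreflexive madj;
  mlen_sym : forall u v, mlen u v = mlen v u;
  mlen_pos : forall u v, madj u v -> 0 < mlen u v;
  mconnected : forall u v, connect madj u v;
  mdeg_pos : forall v, exists w, madj v w }.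

Section MetricGraph.
Variables (R : realType) (G : mgraph R).
Local Notation V := (@mV R G).
Local Notation adj := (@madj R G).
Local Notation len := (@mlen R G).

(* raw points: a vertex, or a point of edge {u,v} at distance t from u *)
Inductive gpoint := GV of V | GE of V & V & R.

(* canonical representation: interior points of an edge {u,v} are written
   with u before v in the enumeration of V, and 0 < t < len u v *)
Definition gvalid (p : gpoint) : bool :=
  match p with
  | GV _ => true
  | GE u v t => [&& adj u v, (enum_rank u < enum_rank v)%N, 0 < t & t < len u v]
  end.

Definition gpt := {p : gpoint | gvalid p}.

Definition vpt (v : V) : gpt := exist _ (GV v) (erefl true).

Fixpoint wlen (u : V) (s : seq V) : R :=
  match s with [::] => 0 | w :: s' => len u w + wlen w s' end.

Definition dV (u w : V) : R :=
  inf [set l | exists s : seq V, [/\ path adj u s, last u s = w & l = wlen u s]].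

Definition anchors (p : gpoint) : seq (V * R) :=
  match p with
  | GV v => [:: (v, 0)]
  | GE u v t => [:: (u, t); (v, len u v - t)]
  end.

(* path distance: either leave through endpoints, or stay on the same edge *)
Definition gdist_raw (p q : gpoint) : R :=
  inf ([set l | exists a b, [/\ a \in anchors p, b \in anchors q &
                   l = a.2 + dV a.1 b.1 + b.2]] `|`
       [set l | exists u v t s, [/\ p = GE u v t, q = GE u v s & l = `|t - s|]]).

Definition gdist (x y : gpt) : R := gdist_raw (val x) (val y).

Definition on_edge (u v : V) (t : R) : gpoint :=
  if t == 0 then GV u else if t == len u v then GV v
  else if (enum_rank u < enum_rank v)%N then GE u v t else GE v u (len u v - t).

(* standing assumption: for x,y on the same edge, d(x,y) = |x - y| *)
Definition edge_isometric : Prop :=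
  forall u v t s, adj u v -> 0 <= t <= len u v -> 0 <= s <= len u v ->
    gdist_raw (on_edge u v t) (on_edge u v s) = `|t - s|.

(* z lies on a minimal path [x,y] *)
Definition in_segment (x y z : gpt) : Prop :=
  gdist x z + gdist z y = gdist x y.

Definition convex_fun (u : gpt -> R) : Prop :=
  forall x y z, x <> y -> in_segment x y z ->
    u z <= gdist y z / gdist x y * u x + gdist x z / gdist x y * u y.

Definition closed_set (A : set gpt) : Prop :=
  forall x, ~ A x -> exists2 r : R, 0 < r & forall y, gdist x y < r -> ~ A y.

Definition terminal (v : V) : Prop := #|[pred w | adj v w]| = 1%N.

(* convex envelope (extended-real valued, +oo if unbounded above) *)
Definition conv_env (A : set gpt) (f : gpt -> R) (x : gpt) : \bar R :=
  ereal_sup [set (u x)%:E | u in [set u : gpt -> R | convex_fun u /\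
                                   forall y, A y -> u y <= f y]].

End MetricGraph.

(* Main.v *)
Require Import Defs.
From HB Require Import structures.
From mathcomp Require Import all_boot all_order all_algebra.
From mathcomp Require Import all_classical all_reals.
From mathcomp Require Import ereal.
From mathcomp Require Import lra.
Import Order.TTheory GRing.Theory Num.Theory.
Set Implicit Arguments. Unset Strict Implicit.
Local Open Scope classical_set_scope.
Local Open Scope ring_scope.

Section InfLemmas.
Variable R : realType.

Lemma inf_le_elt (S : set R) l : (forall x, S x -> 0 <= x) -> S l -> inf S <= l.
Proof. move=> h Sl; apply: (ge_inf _ Sl); by exists 0 => y /h. Qed.

Lemma inf_ge0 (S : set R) : (forall x, S x -> 0 <= x) -> 0 <= inf S.
Proof.
move=> h; case: (pselect (S !=set0)) => [ne|e]; first exact: lb_le_inf ne h.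
have -> : S = set0 by apply/seteqP; split => // x Sx; apply: e; exists x.
by rewrite inf0.
Qed.

Lemma lt_of_le_ne (x y : R) : x <= y -> x <> y -> x < y.
Proof. by move=> h ne; rewrite lt_neqAle h andbT; apply/eqP. Qed.

Lemma abs_cases (x : R) : (`|x| = x /\ 0 <= x) \/ (`|x| = - x /\ x < 0).
Proof. by case: (ltrP x 0) => h; [right; rewrite ltr0_norm | left; rewrite ger0_norm]. Qed.

Lemma pp_arith (a b s d gx gy : R) : `|a - s| + `|s - b| = `|a - b| -> d - a <= gx ->
  d - b <= gy -> 0 <= gx -> 0 <= gy -> `|a - b| * (d - s) <= `|b - s| * gx + `|a - s| * gy.
Proof.
rewrite (distrC b s).
case: (abs_cases (a - s)) => [[-> ?]|[-> ?]]; case: (abs_cases (s - b)) => [[-> ?]|[-> ?]];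
  case: (abs_cases (a - b)) => [[-> ?]|[-> ?]] => *; nra.
Qed.

Lemma po_arith (a s e L d gx gy : R) : `|a - s| + (e + L - s) = e + L - a -> 0 <= e ->
  d <= L -> d - a <= gx -> 0 <= gy -> 0 <= gx -> s < d ->
  (e + L - a) * (d - s) <= (e + L - s) * gx + `|a - s| * gy.
Proof. case: (abs_cases (a - s)) => [[-> ?]|[-> ?]] => *; nra. Qed.

Lemma mul_conv (D a b ux uy uz : R) : 0 < D -> uz <= a / D * ux + b / D * uy ->
  D * uz <= a * ux + b * uy.
Proof.
move=> D0; have -> : a / D * ux + b / D * uy = (a * ux + b * uy) / D.
  by rewrite mulrDl (mulrAC a) (mulrAC b).
by rewrite ler_pdivlMr // mulrC.
Qed.

Lemma conv_prove (D a b gx gy gz : R) : 0 < D -> D * gz <= a * gx + b * gy ->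
  gz <= a / D * gx + b / D * gy.
Proof.
move=> D0; have -> : a / D * gx + b / D * gy = (a * gx + b * gy) / D.
  by rewrite mulrDl (mulrAC a) (mulrAC b).
by rewrite ler_pdivlMr // mulrC.
Qed.

Lemma neg_le_norm (x : R) : - x <= `|x|.
Proof. by rewrite -normrN ler_norm. Qed.

End InfLemmas.

Section Graph.
Variables (R : realType) (G : mgraph R).
Local Notation V := (mV G).
Local Notation adj := (@madj R G).
Local Notation len := (@mlen R G).

Lemma len_pos (u v : V) : adj u v -> 0 < len u v.
Proof. exact: mlen_pos. Qed.

Lemma wlen_ge0 (u : V) s : path adj u s -> 0 <= wlen u s.
Proof.
elim: s u => [|w s IH] u //= /andP [h1 h2].
by rewrite addr_ge0 //; [exact/ltW/len_pos | exact: IH].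
Qed.

Lemma wlen_cat (u : V) s1 s2 : wlen u (s1 ++ s2) = wlen u s1 + wlen (last u s1) s2.
Proof. by elim: s1 u => [|w s IH] u /=; rewrite ?add0r // IH addrA. Qed.

Lemma wlen_rcons (u : V) s y : wlen u (rcons s y) = wlen u s + len (last u s) y.
Proof. by rewrite -cats1 wlen_cat /= addr0. Qed.

Lemma dV_le (u w : V) s : path adj u s -> last u s = w -> dV u w <= wlen u s.
Proof.
move=> p l; rewrite /dV; apply: inf_le_elt; last by exists s.
by move=> x [s' [p' _ ->]]; exact: wlen_ge0.
Qed.

Lemma le_dV (u w : V) m : (forall s, path adj u s -> last u s = w -> m <= wlen u s) ->
  m <= dV u w.
Proof.
move=> h; apply: lb_le_inf.
  have /connectP [s p e] := mconnected u w.
  by exists (wlen u s), s; split.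
by move=> x [s [p e ->]]; exact: h.
Qed.

Lemma dV_ge0 (u w : V) : 0 <= dV u w.
Proof. by apply: inf_ge0 => x [s [p _ ->]]; exact: wlen_ge0. Qed.

Lemma dV_refl (u : V) : dV u u = 0.
Proof.
by apply: le_anti; rewrite dV_ge0 andbT; exact: (@dV_le u u [::]).
Qed.

Lemma dV_tri (a w b : V) : dV a b <= dV a w + dV w b.
Proof.
suff: dV a b - dV w b <= dV a w by lra.
apply: le_dV => s1 p1 l1.
suff: dV a b - wlen a s1 <= dV w b by lra.
apply: le_dV => s2 p2 l2.
have := @dV_le a b (s1 ++ s2).
rewrite cat_path last_cat wlen_cat l1 p1 p2 => /(_ isT l2); lra.
Qed.

Lemma last_rbl (w : V) s : last (last w s) (rev (belast w s)) = w.
Proof. by case: s => [|a s] //=; rewrite rev_cons last_rcons. Qed.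

Lemma wlen_rev (u : V) s : wlen (last u s) (rev (belast u s)) = wlen u s.
Proof.
elim: s u => [|w s IH] u //=.
by rewrite rev_cons wlen_rcons IH last_rbl mlen_sym addrC.
Qed.

Lemma dV_sym (a b : V) : dV a b = dV b a.
Proof.
suff h : forall a b : V, dV b a <= dV a b by apply: le_anti; rewrite !h.
move=> {}a {}b; apply: le_dV => s p l.
rewrite -wlen_rev; have := @dV_le (last a s) a (rev (belast a s)).
rewrite l; apply; last by rewrite -l last_rbl.
have e : (fun z => adj^~ z) =2 adj by move=> x y /=; exact: madj_sym.
by rewrite -l rev_path (eq_path e).
Qed.

Lemma dV_pend (v w a : V) : adj v w -> (forall w', adj v w' -> w' = w) -> a != v ->
  dV a v = dV a w + len v w.
Proof.
move=> hvw uq nav; apply: le_anti; apply/andP; split.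
  suff: dV a v - len v w <= dV a w by lra.
  apply: le_dV => s p l.
  have := @dV_le a v (rcons s v).
  rewrite rcons_path p l madj_sym hvw last_rcons wlen_rcons l mlen_sym.
  move=> /(_ isT erefl); lra.
apply: le_dV => s; case/lastP: s => [|s y] p l.
  by move: l nav => /= ->; rewrite eqxx.
rewrite last_rcons in l; subst y.
move: p; rewrite rcons_path => /andP [p e].
have lw : last a s = w by apply: uq; rewrite madj_sym.
rewrite wlen_rcons lw mlen_sym.
have := @dV_le a w s p lw; lra.
Qed.

Definition c0 := (\sum_(p : V * V | adj p.1 p.2) (len p.1 p.2)^-1)^-1.

Lemma c0_sum (a b : V) : adj a b -> (len a b)^-1 <= \sum_(p : V * V | adj p.1 p.2) (len p.1 p.2)^-1.
Proof.
move=> h; rewrite (bigD1 (a, b)) //= lerDl; apply: sumr_ge0 => p /andP [hp _].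
by rewrite invr_ge0 ltW // len_pos.
Qed.

Lemma c0_le (a b : V) : adj a b -> c0 <= len a b.
Proof.
move=> h; have hs := @c0_sum _ _ h.
have p1 : 0 < (len a b)^-1 by rewrite invr_gt0 len_pos.
have p2 : 0 < \sum_(p : V * V | adj p.1 p.2) (len p.1 p.2)^-1 by apply: lt_le_trans hs.
by rewrite /c0 -[len a b]invrK lef_pV2 ?posrE.
Qed.

Lemma c0_pos (a : V) : 0 < c0.
Proof.
have [w h] := mdeg_pos a; have hs := @c0_sum _ _ h.
have p1 : 0 < (len a w)^-1 by rewrite invr_gt0 len_pos.
by rewrite /c0 invr_gt0; apply: lt_le_trans hs.
Qed.

Lemma dV_pos (a b : V) : a != b -> c0 <= dV a b.
Proof.
move=> nab; apply: le_dV; case=> [|x s] /= p l; first by rewrite l eqxx in nab.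
move/andP: p => [e p]; have := @c0_le _ _ e; have := @wlen_ge0 _ _ p; lra.
Qed.


Local Notation gpoint := (gpoint G).

Definition gset (p q : gpoint) : set R :=
  [set l | exists a b, [/\ a \in anchors p, b \in anchors q & l = a.2 + dV a.1 b.1 + b.2]] `|`
  [set l | exists u v t s, [/\ p = GE u v t, q = GE u v s & l = `|t - s|]].

Lemma gdistE (p q : gpoint) : gdist_raw p q = inf (gset p q). Proof. by []. Qed.

Lemma anchors_ge0 (p : gpoint) a : gvalid p -> a \in anchors p -> 0 <= a.2.
Proof.
case: p => [x|x y t] /=; first by move=> _; rewrite inE => /eqP ->.
case/and4P => _ _ t0 tl; rewrite !inE => /orP [] /eqP -> /=; lra.
Qed.

Lemma gset_ge0 (p q : gpoint) : gvalid p -> gvalid q -> forall l, gset p q l -> 0 <= l.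
Proof.
move=> hp hq l [[a [b [ha hb ->]]] | [u [v [t [s [_ _ ->]]]]]] //.
have := anchors_ge0 hp ha; have := anchors_ge0 hq hb; have := dV_ge0 a.1 b.1; lra.
Qed.

Lemma gdist_le (p q : gpoint) (a b : V * R) : gvalid p -> gvalid q -> a \in anchors p -> b \in anchors q ->
  gdist_raw p q <= a.2 + dV a.1 b.1 + b.2.
Proof. move=> hp hq ha hb; apply: inf_le_elt (gset_ge0 hp hq) _; left; by exists a, b. Qed.

Lemma gdist_le_edge (u v : V) t s : gvalid (GE u v t) -> gvalid (GE u v s) ->
  gdist_raw (GE u v t) (GE u v s) <= `|t - s|.
Proof. move=> hp hq; apply: inf_le_elt (gset_ge0 hp hq) _; right; by exists u, v, t, s. Qed.

Lemma anchors_ex (p : gpoint) : exists a, a \in anchors p.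
Proof. by case: p => [x|x y t]; eexists; exact: mem_head. Qed.

Lemma le_gdist (p q : gpoint) m :
  (forall a b, a \in anchors p -> b \in anchors q -> m <= a.2 + dV a.1 b.1 + b.2) ->
  (forall u v t s, p = GE u v t -> q = GE u v s -> m <= `|t - s|) ->
  m <= gdist_raw p q.
Proof.
move=> h1 h2; apply: lb_le_inf.
  have [a ha] := anchors_ex p; have [b hb] := anchors_ex q.
  by exists (a.2 + dV a.1 b.1 + b.2); left; exists a, b.
move=> l [[a [b [ha hb ->]]] | [u [v [t [s [e1 e2 ->]]]]]]; first exact: h1.
exact: h2 e1 e2.
Qed.

Lemma gdist_sym_raw (p q : gpoint) : gvalid p -> gvalid q -> gdist_raw p q = gdist_raw q p.
Proof.
suff h : forall p q : gpoint, gvalid p -> gvalid q -> gdist_raw q p <= gdist_raw p q.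
  by move=> hp hq; apply: le_anti; rewrite !h.
move=> {}p {}q hp hq; apply: le_gdist.
  move=> a b ha hb; have := gdist_le hq hp hb ha; rewrite dV_sym; lra.
move=> u v t s ep eq; subst p q; rewrite distrC; exact: gdist_le_edge.
Qed.

Lemma gdistC (x y : gpt G) : gdist x y = gdist y x.
Proof. exact: gdist_sym_raw (valP x) (valP y). Qed.

Lemma gdist_ge0 (x y : gpt G) : 0 <= gdist x y.
Proof. exact: inf_ge0 (gset_ge0 (valP x) (valP y)). Qed.

Definition rho (p : gpoint) : R :=
  match p with GV _ => 1 | GE u v t => Num.min t (len u v - t) end.
Definition ee (p q : gpoint) : R := match p, q with
  | GE u v t, GE u' v' s => if (u == u') && (v == v') then `|t - s| else 1
  | _, _ => 1 end.

Lemma rho_pos (p : gpoint) : gvalid p -> 0 < rho p.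
Proof.
case: p => [x|x y t] /=; first by rewrite ltr01.
case/and4P => _ _ t0 tl; rewrite lt_min; apply/andP; split; lra.
Qed.

Lemma ee_pos (p q : gpoint) : p <> q -> 0 < ee p q.
Proof.
case: p => [x|x y t]; case: q => [x'|x' y' s] //= ne; rewrite ?ltr01 //.
case: ifP => [/andP [/eqP e1 /eqP e2]|_]; last by rewrite ltr01.
subst; rewrite normr_gt0 subr_eq0; apply/eqP => ets; apply: ne; by rewrite ets.
Qed.

Lemma anchors_GV (x : V) (a : V * R) : a \in anchors (GV x : gpoint) -> a = (x, 0).
Proof. by rewrite inE => /eqP. Qed.

Lemma anchors_rho (p : gpoint) (a : V * R) : a \in anchors p -> rho p <= a.2 \/ exists x, p = GV x.
Proof.
case: p => [x|x y t] /=; first by right; exists x.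
by rewrite !inE => /orP [] /eqP -> /=; left; rewrite ge_min lexx ?orbT.
Qed.

Lemma gdist_pos (p q : gpoint) : gvalid p -> gvalid q -> p <> q -> 0 < gdist_raw p q.
Proof.
move=> hp hq ne.
have [[a0 ?] _] := anchors_ex p.
set c := Num.min c0 (Num.min (rho p) (Num.min (rho q) (ee p q))).
have cpos : 0 < c by rewrite !lt_min (c0_pos a0) rho_pos // rho_pos // ee_pos.
have c1 : c <= c0 by rewrite ge_min lexx.
have c2 : c <= rho p by rewrite /c ge_min ge_min lexx orbT.
have c3 : c <= rho q by rewrite /c ge_min ge_min ge_min lexx !orbT.
have c4 : c <= ee p q by rewrite /c ge_min ge_min ge_min lexx !orbT.
apply: lt_le_trans cpos _; apply: le_gdist.
  move=> a b ha hb; have a2 := anchors_ge0 hp ha; have b2 := anchors_ge0 hq hb.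
  have d0 := dV_ge0 a.1 b.1.
  case: (eqVneq a.1 b.1) => eab; last by have := dV_pos eab; lra.
  case: (anchors_rho ha) => [|[x ex]]; first lra.
  case: (anchors_rho hb) => [|[y ey]]; first lra.
  subst p q; move: ha hb => /anchors_GV ha /anchors_GV hb; subst a b.
  by simpl in eab; subst y.
by move=> u v t s ep eq; subst p q; move: c4; rewrite /= !eqxx.
Qed.

Lemma gdist_gt0 (x y : gpt G) : x <> y -> 0 < gdist x y.
Proof. by move=> ne; apply: gdist_pos (valP x) (valP y) _ => e; apply: ne; exact: val_inj. Qed.

Lemma rank_lt (u v : V) : adj u v -> ~~ (enum_rank u < enum_rank v)%N ->
  (enum_rank v < enum_rank u)%N.
Proof.
move=> h; rewrite -leqNgt leq_eqVlt => /orP [/eqP e|//].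
have : enum_rank v = enum_rank u by apply: val_inj.
by move/enum_rank_inj => vu; rewrite vu madj_irr in h.
Qed.

Lemma on_edge_valid (u v : V) t : adj u v -> 0 <= t <= len u v -> gvalid (on_edge u v t).
Proof.
move=> h /andP [t0 tl]; rewrite /on_edge.
case: eqP => // tn0; case: eqP => // tnl.
have t0' : 0 < t by apply: lt_of_le_ne => // e; apply: tn0.
have tl' : t < len u v by exact: lt_of_le_ne.
case: ifP => hr /=; first by rewrite h hr t0' tl'.
rewrite madj_sym h (rank_lt h (negbT hr)) (mlen_sym v u) /=; apply/andP; split; lra.
Qed.

Definition pt (u v : V) (t : R) : gpt G := insubd (vpt u) (on_edge u v t).

Lemma val_pt (u v : V) t : adj u v -> 0 <= t <= len u v -> val (pt u v t) = on_edge u v t.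
Proof. by move=> h ht; rewrite /pt insubdK //; exact: on_edge_valid. Qed.

Lemma pt0 (u v : V) : adj u v -> pt u v 0 = vpt u.
Proof.
move=> h; have hl := len_pos h.
by apply: val_inj; rewrite val_pt ?lexx ?ltW //= /on_edge eqxx.
Qed.

Lemma ptL (u v : V) : adj u v -> pt u v (len u v) = vpt v.
Proof.
move=> h; have hl := len_pos h.
have r : 0 <= len u v <= len u v by rewrite ltW // lexx.
by apply: val_inj; rewrite val_pt // /on_edge gt_eqF // eqxx.
Qed.

Lemma pt_GE (x : gpt G) (a b : V) t : val x = GE a b t -> x = pt a b t.
Proof.
move=> e; have := valP x; rewrite e /= => /and4P [h r t0 tl].
have rr : 0 <= t <= len a b by rewrite ltW // ltW.
by apply: val_inj; rewrite e val_pt // /on_edge gt_eqF // lt_eqF // r.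
Qed.

Lemma pt_GV (x : gpt G) (a : V) : val x = GV a -> x = vpt a.
Proof. by move=> e; apply: val_inj; rewrite e. Qed.

Lemma gdist_pt (EI : edge_isometric G) (u v : V) t s : adj u v -> 0 <= t <= len u v ->
  0 <= s <= len u v -> gdist (pt u v t) (pt u v s) = `|t - s|.
Proof. by move=> h ht hs; rewrite /gdist !val_pt //; exact: EI. Qed.

Lemma anchors_on_edge (u v : V) t (b : V * R) : adj u v -> 0 <= t <= len u v ->
  b \in anchors (on_edge u v t) -> b = (u, t) \/ b = (v, len u v - t).
Proof.
move=> h /andP [t0 tl]; rewrite /on_edge.
case: eqP => [-> /anchors_GV ->|tn0]; first by left.
case: eqP => [-> /anchors_GV ->|tnl]; first by right; rewrite subrr.
case: ifP => _ /=; rewrite !inE => /orP [] /eqP ->; auto.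
by left; congr pair; rewrite (mlen_sym v u); lra.
Qed.

Lemma anchor_first (u v : V) t : adj u v -> 0 <= t < len u v -> (u, t) \in anchors (on_edge u v t).
Proof.
move=> h /andP [t0 tl]; rewrite /on_edge.
case: eqP => [->|_]; first exact: mem_head.
rewrite lt_eqF //; case: ifP => _ /=; rewrite !inE ?eqxx //.
apply/orP; right; apply/eqP; congr pair; rewrite (mlen_sym v u); lra.
Qed.

Lemma anchor_second (u v : V) t : adj u v -> 0 < t <= len u v ->
  (v, len u v - t) \in anchors (on_edge u v t).
Proof.
move=> h /andP [t0 tl]; rewrite /on_edge gt_eqF //.
case: eqP => [->|_]; first by rewrite subrr mem_head.
by case: ifP => _ /=; rewrite !inE ?eqxx ?orbT.
Qed.

Lemma on_edge_GE (u v : V) t (x y : V) s : on_edge u v t = GE x y s ->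
  (x = u /\ y = v) \/ (x = v /\ y = u).
Proof.
rewrite /on_edge; case: eqP => _ //; case: eqP => _ //.
by case: ifP => _ [<- <- _]; auto.
Qed.


Lemma gdist_two (v w1 w2 : V) e : adj v w1 -> adj v w2 -> w1 != w2 -> 0 < e ->
  2 * e <= len v w1 -> 2 * e <= len v w2 ->
  gdist (pt v w1 e) (pt v w2 e) = 2 * e.
Proof.
move=> h1 h2 n12 e0 l1 l2.
have r1 : 0 <= e <= len v w1 by apply/andP; split; lra.
have r2 : 0 <= e <= len v w2 by apply/andP; split; lra.
have r1' : 0 <= e < len v w1 by apply/andP; split; lra.
have r2' : 0 <= e < len v w2 by apply/andP; split; lra.
rewrite /gdist !val_pt //; apply: le_anti; apply/andP; split.
  have := gdist_le (on_edge_valid h1 r1) (on_edge_valid h2 r2)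
    (anchor_first h1 r1') (anchor_first h2 r2').
  rewrite /= dV_refl; lra.
apply: le_gdist.
  move=> a b ha hb.
  have d1 := dV_ge0 v w2; have d2 := dV_ge0 w1 v; have d3 := dV_ge0 w1 w2.
  by case: (anchors_on_edge h1 r1 ha) => ->; case: (anchors_on_edge h2 r2 hb) => -> /=;
    rewrite ?dV_refl; lra.
move=> x y t s /on_edge_GE o1 /on_edge_GE o2.
case: o1 => [[ex ey]|[ex ey]]; case: o2 => [[ex' ey']|[ex' ey']]; subst;
  by move: n12 h1 h2; rewrite ?eqxx ?madj_irr.
Qed.

Lemma terminal_uniq (v : V) : terminal v ->
  exists w, adj v w /\ forall w', adj v w' -> w' = w.
Proof.
rewrite /terminal => /eqP /card1P [w hw].
exists w; split; first by move: (hw w); rewrite !inE eqxx => ->.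
by move=> w' h; move: (hw w'); rewrite !inE h => /esym /eqP.
Qed.

Lemma nonterminal_other (v w : V) : ~ terminal v -> adj v w ->
  exists w2, adj v w2 /\ w2 != w.
Proof.
move=> nt h; case: (pselect (exists w2, adj v w2 /\ w2 != w)) => // nex.
exfalso; apply: nt; rewrite /terminal; apply/eqP/card1P; exists w => w'; rewrite !inE.
case: (eqVneq w' w) => [->|ne]; first by rewrite h.
by apply/negbTE/negP => h'; apply: nex; exists w'; split.
Qed.

Definition outside (v : V) (x : gpt G) := forall a, a \in anchors (val x) -> a.1 != v.

Lemma classify (v w : V) (x : gpt G) : adj v w -> (forall w', adj v w' -> w' = w) ->
  (exists2 s, 0 <= s <= len v w & x = pt v w s) \/ outside v x.
Proof.
move=> hvw uq.
have hl := len_pos hvw.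
case: x => [[a|a b t] hx].
- have [e|ne] := eqVneq a v.
    left; exists 0; first by rewrite lexx ltW.
    by subst; rewrite pt0 //; apply: val_inj.
  by right => c /anchors_GV -> /=.
- have H := hx; simpl in H; case/and4P: H => hab r t0 tl.
  have [ea|na] := eqVneq a v.
    subst a; have eb := uq _ hab; subst b.
    left; exists t; first by rewrite !ltW.
    by apply: pt_GE.
  have [eb|nb] := eqVneq b v.
    subst b; have ea : a = w by apply: uq; rewrite madj_sym.
    subst a; rewrite (mlen_sym w v) in tl.
    have rr : 0 <= len v w - t <= len v w by apply/andP; split; lra.
    left; exists (len v w - t) => //.
    apply: val_inj; rewrite val_pt //= /on_edge gt_eqF ?subr_gt0 // lt_eqF; last by lra.
    have nr : ~~ (enum_rank v < enum_rank w)%N by rewrite -leqNgt ltnW.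
    by rewrite (negbTE nr); congr GE; rewrite subKr.
  by right => c; rewrite /= !inE => /orP [] /eqP -> /=.
Qed.

Lemma gdist_out_pend (v w : V) (x : gpt G) s : adj v w ->
  (forall w', adj v w' -> w' = w) ->
  outside v x -> 0 <= s <= len v w ->
  gdist x (pt v w s) = gdist x (vpt w) + len v w - s.
Proof.
move=> hvw uq out hs.
have hl := len_pos hvw.
have hx := valP x.
have vw := on_edge_valid hvw hs.
rewrite /gdist val_pt //=.
have pend : forall a, a \in anchors (val x) -> dV a.1 v = dV a.1 w + len v w.
  by move=> a ha; exact: dV_pend hvw uq (out a ha).
move: hs => /andP [s0 sl].
apply: le_anti; apply/andP; split.
- suff: gdist_raw (val x) (on_edge v w s) - (len v w - s) <= gdist_raw (val x) (GV w) by lra.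
  apply: le_gdist; last by move=> ? ? ? ? _ [].
  move=> a b ha /anchors_GV -> /=.
  have pa := pend a ha.
  case: (eqVneq s 0) => [es|sn0].
    subst s.
    have hh : (0:R) <= 0 < len v w by rewrite lexx hl.
    have := gdist_le hx vw ha (anchor_first hvw hh); rewrite /=; lra.
  have hh : 0 < s <= len v w by rewrite sl lt_of_le_ne // => e; rewrite e eqxx in sn0.
  have := gdist_le hx vw ha (anchor_second hvw hh); rewrite /=; lra.
- apply: le_gdist.
  + move=> a b ha hb.
    have d1 := gdist_le hx (isT : gvalid (GV w)) ha (mem_head _ _).
    have pa := pend a ha; have a0 := anchors_ge0 hx ha.
    have hs : 0 <= s <= len v w by rewrite s0 sl.
    by case: (anchors_on_edge hvw hs hb) => -> /=; rewrite /= in d1; lra.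
  + move=> u u' t t' ex0 eq.
    have ex : val x = GE u u' t := ex0.
    case: (on_edge_GE eq) => [[e1 e2]|[e1 e2]]; subst.
      by move: (out (v, t)); rewrite ex => /(_ (mem_head _ _)) /=; rewrite eqxx.
    have hm : (v, len w v - t) \in anchors (GE w v t : gpoint).
      by rewrite /= !inE eqxx orbT.
    by move: (out (v, len w v - t)); rewrite ex => /(_ hm) /=; rewrite eqxx.
Qed.

Lemma gdist_tri_vert (x y : gpt G) (w : V) :
  gdist x y <= gdist x (vpt w) + gdist (vpt w) y.
Proof.
rewrite /gdist /=.
have hx := valP x; have hy := valP y.
suff: gdist_raw (val x) (val y) - gdist_raw (GV w) (val y) <= gdist_raw (val x) (GV w) by lra.
apply: le_gdist; last by move=> ? ? ? ? _ [].
move=> a b ha /anchors_GV -> /=.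
suff: gdist_raw (val x) (val y) - (a.2 + dV a.1 w + 0) <= gdist_raw (GV w) (val y) by lra.
apply: le_gdist; last by move=> ? ? ? ? [].
move=> c d /anchors_GV -> hd /=.
have := gdist_le hx hy ha hd; have := dV_tri a.1 w d.1; lra.
Qed.


Section WithEI.
Variable EI : edge_isometric G.

Lemma pt_neq (a b : V) t s : adj a b -> 0 <= t <= len a b -> 0 <= s <= len a b -> t != s ->
  pt a b t <> pt a b s.
Proof.
move=> h ht hs ne e; have := gdist_pt EI h ht hs; rewrite e (gdist_pt EI h hs hs) subrr normr0.
by move/esym/eqP; rewrite normr_eq0 subr_eq0 (negbTE ne).
Qed.

Lemma gdist_self (x : gpt G) : gdist x x = 0.
Proof.
case: (anchors_ex (val x)) => [[a _] _].
have [w h] := mdeg_pos a.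
suff [b [t [h' ht ->]]] : exists b t, [/\ adj b t.1, 0 <= t.2 <= len b t.1 & x = pt b t.1 t.2].
  by rewrite gdist_pt // subrr normr0.
have hl := len_pos h.
case: x => [[c|c d t] hx].
  have [w' h'] := mdeg_pos c; have hl' := len_pos h'.
  exists c, (w', 0); split => //=; first by rewrite lexx ltW.
  by rewrite pt0 //; apply: val_inj.
have H := hx; simpl in H; case/and4P: H => hcd r t0 tl.
exists c, (d, t); split => //=; first by rewrite !ltW.
exact: pt_GE.
Qed.

Lemma seg_edge (a b : V) t s r : adj a b -> 0 <= t -> t <= s -> s <= r -> r <= len a b ->
  in_segment (pt a b t) (pt a b r) (pt a b s).
Proof.
move=> h t0 ts sr rl.
have r1 : 0 <= t <= len a b by apply/andP; split; lra.
have r2 : 0 <= s <= len a b by apply/andP; split; lra.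
have r3 : 0 <= r <= len a b by apply/andP; split; lra.
rewrite /in_segment !gdist_pt //.
by rewrite !ler0_norm ?subr_le0 //; lra.
Qed.

Section Upper.
Variable u : gpt G -> R.
Hypothesis cu : convex_fun u.

Lemma conv3 (a b : V) t1 s t2 : adj a b -> 0 <= t1 -> t1 <= s -> s <= t2 -> t2 <= len a b ->
  t1 < t2 ->
  (t2 - t1) * u (pt a b s) <= (t2 - s) * u (pt a b t1) + (s - t1) * u (pt a b t2).
Proof.
move=> h t0 ts st tl lt.
have r1 : 0 <= t1 <= len a b by apply/andP; split; lra.
have r2 : 0 <= t2 <= len a b by apply/andP; split; lra.
have rs : 0 <= s <= len a b by apply/andP; split; lra.
have ne : pt a b t1 <> pt a b t2 by apply: pt_neq => //; rewrite lt_eqF.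
have := cu ne (seg_edge h t0 ts st tl).
rewrite !gdist_pt //.
have e1 : `|t2 - s| = t2 - s by rewrite ger0_norm // subr_ge0.
have e2 : `|t1 - s| = s - t1 by rewrite distrC ger0_norm // subr_ge0.
have e3 : `|t1 - t2| = t2 - t1 by rewrite distrC ger0_norm // subr_ge0 ltW.
rewrite e1 e2 e3; apply: mul_conv; lra.
Qed.

Lemma edge_le_max (a b : V) t : adj a b -> 0 <= t <= len a b ->
  u (pt a b t) <= Num.max (u (vpt a)) (u (vpt b)).
Proof.
move=> h /andP [t0 tl]; have hl := len_pos h.
have := conv3 h (lexx 0) t0 tl (lexx _) hl.
rewrite pt0 // ptL // !subr0.
set m := Num.max _ _.
have m1 : u (vpt a) <= m by rewrite le_max lexx.
have m2 : u (vpt b) <= m by rewrite le_max lexx orbT.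
move=> hc.
have k1 : (len a b - t) * u (vpt a) <= (len a b - t) * m by apply: ler_wpM2l => //; lra.
have k2 : t * u (vpt b) <= t * m by apply: ler_wpM2l.
rewrite -(ler_pM2l hl); lra.
Qed.

Lemma key_vertex (M : R) (v w : V) t : (forall x, u x <= M) -> u (vpt v) = M ->
  ~ terminal v -> adj v w -> 0 < t <= len v w -> u (pt v w t) = M.
Proof.
move=> hM hv nt h /andP [t0 tl].
have [w2 [h2 n2]] := nonterminal_other nt h.
have hl2 := len_pos h2.
set m := Num.min t (len v w2).
have m1 : m <= t by rewrite ge_min lexx.
have m2 : m <= len v w2 by rewrite ge_min lexx orbT.
have m0 : 0 < m by rewrite lt_min t0 hl2.
set e := m / 4.
have e0 : 0 < e by rewrite /e; lra.
have e4 : 4 * e = m by rewrite /e; lra.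
have n12 : w != w2 by rewrite eq_sym.
have dpq := gdist_two h h2 n12 e0 (ltac:(lra) : 2 * e <= len v w) (ltac:(lra) : 2 * e <= len v w2).
have r1 : 0 <= e <= len v w by apply/andP; split; lra.
have r2 : 0 <= e <= len v w2 by apply/andP; split; lra.
have z1 : (0:R) <= 0 <= len v w by rewrite lexx ltW // len_pos.
have z2 : (0:R) <= 0 <= len v w2 by rewrite lexx ltW.
have dpv : gdist (pt v w e) (vpt v) = e by rewrite -(pt0 h) gdist_pt // subr0 ger0_norm // ltW.
have dvq : gdist (vpt v) (pt v w2 e) = e.
  by rewrite -(pt0 h2) gdist_pt // sub0r normrN ger0_norm // ltW.
have dqv : gdist (pt v w2 e) (vpt v) = e by rewrite gdistC.
have ne : pt v w e <> pt v w2 e.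
  by move=> epq; move: dpq; rewrite epq gdist_self => h0; lra.
have seg : in_segment (pt v w e) (pt v w2 e) (vpt v).
  by rewrite /in_segment dpv dvq dpq; lra.
have hc0 := cu ne seg; rewrite dqv dpv dpq hv in hc0.
have hc := mul_conv (ltac:(lra) : 0 < 2 * e) hc0.
have hp := hM (pt v w e); have hq := hM (pt v w2 e).
have k1 : e * u (pt v w2 e) <= e * M by apply: ler_wpM2l => //; exact: ltW.
have up : u (pt v w e) = M.
  by apply: le_anti; rewrite hp /= -(ler_pM2l e0); lra.
have := conv3 h (lexx 0) (ltW e0) (ltac:(lra) : e <= t) tl (ltac:(lra) : 0 < t).
rewrite pt0 // hv up !subr0 => hc2.
have ht := hM (pt v w t).
by apply: le_anti; rewrite ht /= -(ler_pM2l e0); lra.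
Qed.

Lemma upper_main (A : set (gpt G)) (a0 : gpt G) : A a0 ->
  (forall v, terminal v -> A (vpt v)) -> forall x, exists2 y, A y & u x <= u y.
Proof.
move=> Aa0 hterm x.
case: (anchors_ex (val a0)) => [[i0 _] _].
have [v0 hv0] : exists v0, forall v, u (vpt v) <= u (vpt v0).
  case: (@arg_maxP _ _ _ i0 predT (fun i => u (vpt i)) isT) => j _ hj.
  by exists j => v; exact: hj.
set M := u (vpt v0).
have hM : forall y, u y <= M.
  move=> y; case E: (val y) => [c|c d t]; first by rewrite (pt_GV E); exact: hv0.
  have hy := valP y; rewrite E in hy; case/and4P: hy => hcd r t0 tl.
  have rr : 0 <= t <= len c d by rewrite !ltW.
  rewrite (pt_GE E); apply: le_trans (edge_le_max hcd rr) _.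
  by rewrite ge_max !hv0.
have hv0M : u (vpt v0) = M by [].
clearbody M.
case: (pselect (exists v, terminal v /\ u (vpt v) = M)) => [[v [tv uv]]|nex].
  by exists (vpt v); [exact: hterm | rewrite uv hM].
have nt : forall v, u (vpt v) = M -> ~ terminal v.
  by move=> v uv tv; apply: nex; exists v.
have step : forall a b, u (vpt a) = M -> adj a b -> u (vpt b) = M.
  move=> a b ua hab; rewrite -(ptL hab); apply: (key_vertex hM ua (nt a ua) hab).
  by rewrite len_pos // lexx.
have gen : forall p a, u (vpt a) = M -> path adj a p -> u (vpt (last a p)) = M.
  by elim=> [|b p IH] a ua //= /andP [hab pth]; exact: IH (step a b ua hab) pth.
have allM : forall v, u (vpt v) = M.
  by move=> v; have /connectP [p pth ->] := mconnected v0 v; exact: gen.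
exists a0 => //; apply: le_trans (hM x) _.
case E: (val a0) => [c|c d t]; first by rewrite (pt_GV E) allM.
have hy := valP a0; rewrite E in hy; case/and4P: hy => hcd r t0 tl.
by rewrite (pt_GE E) (key_vertex hM (allM c) (nt c (allM c)) hcd) // t0 ltW.
Qed.

End Upper.

Lemma const_convex (c : R) : convex_fun (fun _ : gpt G => c).
Proof.
move=> x y z ne seg; have D0 := gdist_gt0 ne.
have s1 : gdist y z / gdist x y + gdist x z / gdist x y = 1.
  by rewrite -mulrDl (gdistC y z) addrC seg divff // gt_eqF.
by rewrite -mulrDl s1 mul1r.
Qed.

Lemma affine_convex (g : gpt G -> R) (c K : R) : 0 <= K -> convex_fun g ->
  convex_fun (fun x => c + K * g x).
Proof.
move=> K0 cg x y z ne seg; have D0 := gdist_gt0 ne.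
have hg := cg x y z ne seg.
have s1 : gdist y z / gdist x y + gdist x z / gdist x y = 1.
  by rewrite -mulrDl (gdistC y z) addrC seg divff // gt_eqF.
move: hg s1; set l := gdist y z / gdist x y; set m := gdist x z / gdist x y => hg s1.
have hK := ler_wpM2l K0 hg.
have e : l * c + m * c = c by rewrite -mulrDl s1 mul1r.
lra.
Qed.

Definition gbump (v : V) (dd : R) (x : gpt G) : R := Num.max 0 (dd - gdist x (vpt v)).

Lemma g_convex (v w : V) (dd : R) : adj v w -> (forall w', adj v w' -> w' = w) ->
  0 < dd -> dd <= len v w -> convex_fun (gbump v dd).
Proof.
move=> hvw uq d0 dL x y z ne seg.
have hL := len_pos hvw.
have z0 : (0:R) <= 0 <= len v w by rewrite lexx ltW.
have dv_pend : forall s, 0 <= s <= len v w -> gdist (pt v w s) (vpt v) = s.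
  move=> s /andP [s0 sl]; rewrite -(pt0 hvw) gdist_pt ?subr0 ?ger0_norm //.
  by rewrite s0 sl.
have dv_out : forall x, outside v x -> gdist x (vpt v) = gdist x (vpt w) + len v w.
  by move=> x0 o; rewrite -(pt0 hvw) (gdist_out_pend hvw uq o z0) subr0.
have D0 := gdist_gt0 ne.
apply: conv_prove D0 _.
have gx0 : 0 <= gbump v dd x by rewrite /gbump le_max lexx.
have gy0 : 0 <= gbump v dd y by rewrite /gbump le_max lexx.
have gxl : dd - gdist x (vpt v) <= gbump v dd x by rewrite /gbump le_max lexx orbT.
have gyl : dd - gdist y (vpt v) <= gbump v dd y by rewrite /gbump le_max lexx orbT.
have dyz0 := gdist_ge0 y z; have dxz0 := gdist_ge0 x z.
case: (lerP (dd - gdist z (vpt v)) 0) => hz.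
  have gz : gbump v dd z = 0 by rewrite /gbump; apply/max_idPl.
  by rewrite gz mulr0 addr_ge0 // mulr_ge0.
have gz : gbump v dd z = dd - gdist z (vpt v) by rewrite /gbump; apply/max_idPr; exact: ltW.
rewrite gz.
case: (classify z hvw uq) => [[s hs ez]|oz]; last first.
  by have := dv_out z oz; have := gdist_ge0 z (vpt w); lra.
subst z; rewrite dv_pend // in hz *.
move: seg; rewrite /in_segment.
case: (classify x hvw uq) => [[a ha ex]|ox]; case: (classify y hvw uq) => [[b hb ey]|oy].
- subst x y; rewrite !gdist_pt // => seg.
  rewrite dv_pend // in gxl; rewrite dv_pend // in gyl.
  exact: pp_arith.
- subst x; rewrite (gdistC (pt v w a) y) (gdistC (pt v w s) y).
  rewrite !(gdist_out_pend hvw uq oy) // gdist_pt // => seg.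
  rewrite dv_pend // in gxl.
  have ey0 := gdist_ge0 y (vpt w).
  apply: po_arith => //; lra.
- subst y; rewrite (gdistC (pt v w s) (pt v w b)) !(gdist_out_pend hvw uq ox) // !gdist_pt // => seg.
  rewrite dv_pend // in gyl.
  have ex0 := gdist_ge0 x (vpt w).
  have e1 : `|b - s| + (gdist x (vpt w) + len v w - s) = gdist x (vpt w) + len v w - b.
    by move: seg; rewrite distrC; lra.
  have := po_arith e1 ex0 dL gyl gx0 gy0 (ltac:(lra) : s < dd); lra.
- rewrite (gdistC (pt v w s) y) !(gdist_out_pend hvw uq ox) // !(gdist_out_pend hvw uq oy) // => seg.
  have := gdist_tri_vert x y w; rewrite (gdistC (vpt w) y).
  have := gdist_ge0 x (vpt w); have := gdist_ge0 y (vpt w).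
  case/andP: hs => s0 sl; lra.
Qed.

End WithEI.

End Graph.

Unset Implicit Arguments.

Theorem theorem1p1 (R : realType) (G : mgraph R) (A : set (gpt G))
    (f : gpt G -> R) :
  edge_isometric G ->
  closed_set A -> A !=set0 ->
  (exists M : R, forall x, A x -> `|f x| <= M) ->
  ((exists M : R, forall x, (`|conv_env A f x| <= M%:E)%E) <->
     (forall v : mV G, terminal v -> A (vpt v))) /\
  ((forall v : mV G, terminal v -> A (vpt v)) ->
     forall x, ((inf (f @` A))%:E <= conv_env A f x <= (sup (f @` A))%:E)%E).
Proof.
move=> EI cA [a0 Aa0] [B hB].
have B0 : 0 <= B by apply: le_trans (hB a0 Aa0); exact: normr_ge0.
have flb : forall y, A y -> - B <= f y by move=> y /hB; rewrite ler_norml => /andP [].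
have fub : forall y, A y -> f y <= B by move=> y /hB; rewrite ler_norml => /andP [].
have hlb : has_lbound (f @` A) by exists (- B) => _ [y Ay <-]; exact: flb.
have hub : has_ubound (f @` A) by exists B => _ [y Ay <-]; exact: fub.
have infle : forall y, A y -> inf (f @` A) <= f y.
  by move=> y Ay; apply: (ge_inf hlb); exists y.
have supge : forall y, A y -> f y <= sup (f @` A).
  by move=> y Ay; apply: (ub_le_sup hub); exists y.
have part2 : (forall v, terminal v -> A (vpt v)) ->
    forall x, ((inf (f @` A))%:E <= conv_env A f x <= (sup (f @` A))%:E)%E.
  move=> hterm x; apply/andP; split.
    apply: ereal_sup_ubound; exists (fun _ => inf (f @` A)) => //; split.
      exact: const_convex.
    by move=> y Ay; exact: infle.
  apply: ge_ereal_sup => _ [u [cu hu] <-]; rewrite lee_fin.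
  have [y Ay hy] := upper_main EI cu Aa0 hterm x.
  by apply: le_trans hy _; apply: le_trans (hu y Ay) _; exact: supge.
split; last exact: part2.
split.
  move=> [M hM] v tv; apply: contrapT => nA.
  have [r r0 hr] := cA (vpt v) nA.
  have [w [hvw uq]] := terminal_uniq tv.
  have hL := len_pos hvw.
  set dd := Num.min r (mlen v w).
  have d0 : 0 < dd by rewrite lt_min r0 hL.
  have dr : dd <= r by rewrite ge_min lexx.
  have dL : dd <= mlen v w by rewrite ge_min lexx orbT.
  set K := (`|M| + B + 1) / dd.
  have Kd : K * dd = `|M| + B + 1 by rewrite /K divfK // gt_eqF.
  have K0 : 0 <= K by rewrite /K divr_ge0 // ?ltW //; have := normr_ge0 M; lra.
  set u := fun x => - B + K * gbump v dd x.
  have cu : convex_fun u by apply: affine_convex K0 (g_convex EI hvw uq d0 dL).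
  have hu : forall y, A y -> u y <= f y.
    move=> y Ay; rewrite /u.
    case: (lerP (dd - gdist y (vpt v)) 0) => h.
      have -> : gbump v dd y = 0 by rewrite /gbump; apply/max_idPl.
      by rewrite mulr0 addr0; exact: flb.
    exfalso; apply: (hr y) Ay; rewrite gdistC; lra.
  have uv : u (vpt v) = - B + K * dd.
    by rewrite /u /gbump (gdist_self EI) subr0; congr (_ + _ * _); apply/max_idPr; exact: ltW.
  have h1 : ((u (vpt v))%:E <= conv_env A f (vpt v))%E.
    by apply: ereal_sup_ubound; exists u.
  have h2 := le_trans (le_trans h1 (lee_abs _)) (hM (vpt v)).
  rewrite lee_fin uv in h2.
  have := ler_norm M; lra.
move=> hterm; exists (`|inf (f @` A)| + `|sup (f @` A)|) => x.
have /andP [h1 h2] := part2 hterm x.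
move: h1 h2; case: (conv_env A f x) => [c| |] h1 h2.
- rewrite /= lee_fin; rewrite !lee_fin in h1 h2.
  set i := inf (f @` A) in h1 *; set j := sup (f @` A) in h2 *.
  have := ler_norm i; have := neg_le_norm i; have := normr_ge0 j; have := normr_ge0 i.
  have := ler_norm j; rewrite ler_norml => *.
  apply/andP; split; lra.
- by rewrite leye_eq in h2.
- by rewrite leeNy_eq in h1.
Qed.
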